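(* Let $C$ be a strictly convex subset of a topological real vector space $V$ and $f:C\to\mathbb{R}$ a continuous function (for the subspace topology on $C$). If $f$ is strictly quasi-convex, then $f$ is strictly sub-convex. In particular, if $f$ is continuous and strictly convex, then $f$ is strictly sub-convex.
   Context: Topological real vector spaces are not assumed Hausdorff. $f$ is strictly quasi-convex if $f((1-t)x+ty)<\max\{f(x),f(y)\}$ for all distinct $x,y\in C$, $t\in(0,1)$; strictly convex if $f((1-t)x+ty)<(1-t)f(x)+tf(y)$ for such $x,y,t$. $S_r(f)=\{x\in C: f(x)\le r\}$. For a subset $S$, $\mathrm{Aff}(S)$ is its affine hull; $\mathrm{ri}(S)$, $\mathrm{rc}(S)$ are the interior and closure of $S$ in the subspace topology of $\mathrm{Aff}(S)$. $]x,y[=\{(1-t)x+ty: t\in[0,1]\}\setminus\{x,y\}$. A set is strictly convex if for any two distinct $x,y$ in its relative closure, $]x,y[$ lies in its relative interior. $f$ is strictly sub-convex if $S_r(f)$ is strictly convex for every $r\in\mathbb{R}$. *)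

(* Defs.v *)
From HB Require Import structures.
From mathcomp Require Import all_boot all_order all_algebra.
From mathcomp Require Import all_classical all_reals all_analysis.
Set Implicit Arguments. Unset Strict Implicit. Unset Printing Implicit Defensive.
Import Order.TTheory GRing.Theory Num.Theory.
Import numFieldNormedType.Exports.
Local Open Scope classical_set_scope.
Local Open Scope ring_scope.

Section Defs.
Context {R : realType} {V : topologicalLmodType R}.

Definition affine_set (A : set V) : Prop :=
  forall x y (t : R), A x -> A y -> A ((1 - t) *: x + t *: y).

Definition Aff (S : set V) : set V :=
  \bigcap_(A in [set A : set V | affine_set A /\ S `<=` A]) A.

Definition ri (S : set V) : set V := @interior (subspace (Aff S)) S.
Definition rc (S : set V) : set V := @closure (subspace (Aff S)) S.

Definition open_segment (x y : V) : set V :=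
  [set z | (exists t : R, 0 <= t <= 1 /\ z = (1 - t) *: x + t *: y)
           /\ z <> x /\ z <> y].

Definition strictly_convex_set (S : set V) : Prop :=
  forall x y, rc S x -> rc S y -> x <> y -> open_segment x y `<=` ri S.

Definition strictly_quasi_convex (C : set V) (f : V -> R) : Prop :=
  forall x y (t : R), C x -> C y -> x <> y -> 0 < t < 1 ->
    f ((1 - t) *: x + t *: y) < Num.max (f x) (f y).

Definition strictly_convex_fun (C : set V) (f : V -> R) : Prop :=
  forall x y (t : R), C x -> C y -> x <> y -> 0 < t < 1 ->
    f ((1 - t) *: x + t *: y) < (1 - t) * f x + t * f y.

Definition sublevel (C : set V) (f : V -> R) (r : R) : set V :=
  [set x | C x /\ f x <= r].

Definition strictly_sub_convex (C : set V) (f : V -> R) : Prop :=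
  forall r : R, strictly_convex_set (sublevel C f r).

End Defs.

(* Main.v *)
Require Import Defs.
From HB Require Import structures.
From mathcomp Require Import all_boot all_order all_algebra.
From mathcomp Require Import all_classical all_reals all_analysis.
Import Order.TTheory GRing.Theory Num.Theory.
Import numFieldNormedType.Exports.
Local Open Scope classical_set_scope.
Local Open Scope ring_scope.
Section Aux.
Context {R : realType} {V : topologicalLmodType R}.
Implicit Types (S C : set V) (x y z : V).

Lemma combE (t : R) x y : (1 - t) *: x + t *: y = x + t *: (y - x).
Proof. by rewrite scalerBl scale1r scalerBr -addrA [- _ + _]addrC. Qed.

Lemma param_neq (a b : R) x (d : V) : a != b -> d != 0 -> x + a *: d <> x + b *: d.
Proof.
move=> ab d0 /addrI /eqP; rewrite -subr_eq0 -scalerBl scaler_eq0 subr_eq0.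
by rewrite (negbTE ab) (negbTE d0).
Qed.

Lemma comb_param (t a b : R) x (d : V) :
  (1 - t) *: (x + a *: d) + t *: (x + b *: d) = x + (a + t * (b - a)) *: d.
Proof.
rewrite combE -addrA; congr (_ + _).
by rewrite opprD addrACA subrr add0r -scalerBl scalerA scalerDl.
Qed.

Lemma affine_Aff S : affine_set (Aff S).
Proof. move=> x y t Ax Ay A /= [aA SA]. apply: (aA x y t); [exact: Ax|exact: Ay]. Qed.

Lemma sub_Aff S : S `<=` Aff S.
Proof. by move=> x Sx A [_ SA]; apply: SA. Qed.

Lemma Aff_min S A : affine_set A -> S `<=` A -> Aff S `<=` A.
Proof. by move=> aA SA x; apply. Qed.

Lemma AffS {S C} : S `<=` C -> Aff S `<=` Aff C.
Proof. move=> SC; apply: Aff_min; [exact: affine_Aff|]; exact: subset_trans (sub_Aff C). Qed.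

Lemma rcE S : rc S = closure S `&` Aff S.
Proof. by rewrite /rc closure_subspaceW //; exact: sub_Aff. Qed.

Lemma rcS S C : S `<=` C -> rc S `<=` rc C.
Proof.
move=> SC; rewrite !rcE => x [cx ax]; split; first exact: (closureS SC).
exact: (AffS SC x ax).
Qed.

Lemma sub_rc S : S `<=` rc S.
Proof. rewrite rcE => x Sx; split; [exact: subset_closure| exact: sub_Aff]. Qed.

Lemma ri_sub S : ri S `<=` S.
Proof. exact: (@interior_subset (subspace (Aff S))). Qed.

Lemma riP S z : Aff S z -> nbhs z [set w | Aff S w -> S w] -> ri S z.
Proof.
move=> az h; rewrite /ri /interior /=.
have e := nbhs_subspace_in az. 
have : within (Aff S) (nbhs z) S by exact: h.
by rewrite e.
Qed.

Lemma riE S z : ri S z -> Aff S z -> nbhs z [set w | Aff S w -> S w].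
Proof.
move=> h az; move: h; rewrite /ri /interior /=.
have e := nbhs_subspace_in az. 
move=> h; have : @nbhs_subspace _ (Aff S) z S by exact: h.
by rewrite -e.
Qed.

End Aux.
Section Aux2.
Context {R : realType} {V : topologicalLmodType R}.
Implicit Types (S C : set V) (x y z : V).

Lemma seg_neq x y (s : R) : x <> y -> 0 < s < 1 ->
  (1 - s) *: x + s *: y <> x /\ (1 - s) *: x + s *: y <> y.
Proof.
move=> xy /andP[s0 s1]; rewrite combE.
have d0 : y - x != 0 by rewrite subr_eq0; apply/eqP => /esym.
set d := y - x in d0 *.
have ey : y = x + 1 *: d by rewrite scale1r /d addrC subrK.
have ex : x = x + 0 *: d by rewrite scale0r addr0.
split.
  rewrite [X in _ <> X]ex; apply: param_neq => //; by rewrite gt_eqF.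
rewrite [X in _ <> X]ey; apply: param_neq => //; by rewrite lt_eqF.
Qed.

Lemma convex_of C x y (s : R) : strictly_convex_set C -> C x -> C y -> 0 <= s <= 1 ->
  C ((1 - s) *: x + s *: y).
Proof.
move=> sC Cx Cy /andP[s0 s1].
have [->|xy] := eqVneq x y.
  by rewrite -scalerDl subrK scale1r.
have [->|sn0] := eqVneq s 0; first by rewrite subr0 scale1r scale0r addr0.
have [->|sn1] := eqVneq s 1; first by rewrite subrr scale0r add0r scale1r.
have xy' : x <> y by apply/eqP.
have s01 : 0 < s < 1 by rewrite !lt_neqAle s0 s1 eq_sym sn0 sn1.
apply: (@ri_sub R V C); apply: (sC x y (sub_rc C x Cx) (sub_rc C y Cy) xy').
have [n1 n2] := seg_neq _ _ _ xy' s01.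
split; last by split.
by exists s; rewrite s0 s1.
Qed.

Lemma cont_lt C (f : V -> R) z r : {within C, continuous f} -> C z -> f z < r ->
  nbhs z [set w | C w -> f w < r].
Proof.
move=> cf Cz fz.
have := (proj1 (subspace_continuousP C f) cf z Cz).
move=> /(_ [set u | u < r]) h; apply: h.
by apply: open_nbhs_nbhs; split => //; exact: open_lt.
Qed.

Lemma cont_gt C (f : V -> R) z r : {within C, continuous f} -> C z -> r < f z ->
  nbhs z [set w | C w -> r < f w].
Proof.
move=> cf Cz fz.
have := (proj1 (subspace_continuousP C f) cf z Cz).
move=> /(_ [set u | r < u]) h; apply: h.
by apply: open_nbhs_nbhs; split => //; exact: open_gt.
Qed.

Lemma comb_nbhs (s : R) x y (U : set V) : nbhs ((1 - s) *: x + s *: y) U ->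
  exists A B, [/\ nbhs x A, nbhs y B &
     forall a b, A a -> B b -> U ((1 - s) *: a + s *: b)].
Proof.
move=> nU.
have [/= PQ [P Q] sPQ] := @add_continuous V ((1 - s) *: x, s *: y) U nU.
have [/= AB [A1 A2] sA] := @scale_continuous R V ((1 - s), x) _ P.
have [/= CD [C1 C2] sC] := @scale_continuous R V (s, y) _ Q.
exists AB.2, CD.2; split => // a b Aa Bb.
apply: (sPQ (_, _)); split => /=.
  apply: (sA (_, _)); split => //; exact: nbhs_singleton.
apply: (sC (_, _)); split => //; exact: nbhs_singleton.
Qed.

End Aux2.
Arguments cont_lt {R V C f z r}.
Arguments cont_gt {R V C f z r}.
Arguments comb_nbhs {R V s x y U}.
Arguments rcS {R V S C}.
Arguments riP {R V S z}.
Arguments riE {R V S z}.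

From mathcomp Require Import lra.
Section Main.
Context {R : realType} {V : topologicalLmodType R}.
Implicit Types (S C : set V) (x y z : V).

Lemma sublevel_comb C (f : V -> R) r x y (s : R) :
  strictly_quasi_convex C f -> sublevel C f r x -> sublevel C f r y -> 0 <= s <= 1 ->
  f ((1 - s) *: x + s *: y) <= r.
Proof.
move=> qc [Cx fx] [Cy fy] /andP[s0 s1].
have [->|xy] := eqVneq x y.
  by rewrite -scalerDl subrK scale1r.
have [->|sn0] := eqVneq s 0; first by rewrite subr0 scale1r scale0r addr0.
have [->|sn1] := eqVneq s 1; first by rewrite subrr scale0r add0r scale1r.
have xy' : x <> y by apply/eqP.
have s01 : 0 < s < 1 by rewrite !lt_neqAle s0 s1 eq_sym sn0 sn1.
apply/ltW/(lt_le_trans (qc x y s Cx Cy xy' s01)).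
by rewrite ge_max fx fy.
Qed.

Arguments sublevel_comb {C f r x y s}.
Lemma key_le C (f : V -> R) r x y (s : R) :
  strictly_convex_set C -> {within C, continuous f} -> strictly_quasi_convex C f ->
  rc (sublevel C f r) x -> rc (sublevel C f r) y -> 0 <= s <= 1 ->
  C ((1 - s) *: x + s *: y) -> f ((1 - s) *: x + s *: y) <= r.
Proof.
move=> sC cf qc hx hy s01 Cz.
rewrite leNgt; apply/negP => hlt.
have N := cont_gt cf Cz hlt.
have [A [B [nA nB hAB]]] := comb_nbhs N.
move: hx hy; rewrite rcE => -[clx _] -[cly _].
have [x' [Sx' Ax']] := clx A nA.
have [y' [Sy' By']] := cly B nB.
have Cw : C ((1 - s) *: x' + s *: y') by apply: convex_of => //; [exact: Sx'.1|exact: Sy'.1].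
have := hAB x' y' Ax' By' Cw.
have := sublevel_comb qc Sx' Sy' s01.
by move=> h1 h2; have := lt_le_trans h2 h1; rewrite ltxx.
Qed.

Arguments key_le {C f r x y s}.
Lemma qc_sub C (f : V -> R) :
  strictly_convex_set C -> {within C, continuous f} -> strictly_quasi_convex C f ->
  strictly_sub_convex C f.
Proof.
move=> sC cf qc r x y hx hy xy z [[t [/andP[t0 t1] ->]] [zx zy]].
set S := sublevel C f r in hx hy *.
have SC : S `<=` C by move=> w [].
have rcx := rcS SC x hx; have rcy := rcS SC y hy.
have tn0 : t != 0.
  by apply/eqP => e; apply: zx; rewrite e subr0 scale1r scale0r addr0.
have tn1 : t != 1.
  by apply/eqP => e; apply: zy; rewrite e subrr scale0r add0r scale1r.
have t01 : 0 < t < 1 by rewrite !lt_neqAle t0 t1 eq_sym tn0 tn1.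
have segri : forall u : R, 0 < u < 1 -> ri C ((1 - u) *: x + u *: y).
  move=> u u01; apply: (sC x y rcx rcy xy).
  have [n1 n2] := seg_neq _ _ _ xy u01.
  split; last by split.
  by exists u; split => //; case/andP: u01 => u0 u1; rewrite (ltW u0) (ltW u1).
have a01 : 0 < t / 2 < 1 by apply/andP; split; lra.
have b01 : 0 < (1 + t) / 2 < 1 by apply/andP; split; lra.
have f1 : f ((1 - t / 2) *: x + (t / 2) *: y) <= r.
  apply: (key_le sC cf qc hx hy); first by case/andP: a01 => ? ?; apply/andP; split; lra.
  exact: ri_sub (segri _ a01).
have f2 : f ((1 - (1 + t) / 2) *: x + ((1 + t) / 2) *: y) <= r.
  apply: (key_le sC cf qc hx hy); first by case/andP: b01 => ? ?; apply/andP; split; lra.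
  exact: ri_sub (segri _ b01).
have d0 : y - x != 0 by rewrite subr_eq0; apply/eqP => /esym.
have z12 : (1 - t / 2) *: x + (t / 2) *: y <> (1 - (1 + t) / 2) *: x + ((1 + t) / 2) *: y.
  rewrite !combE; apply: param_neq => //; apply/eqP; lra.
have ez : (1 - t) *: ((1 - t / 2) *: x + (t / 2) *: y) +
          t *: ((1 - (1 + t) / 2) *: x + ((1 + t) / 2) *: y) = (1 - t) *: x + t *: y.
  rewrite (combE (t / 2)) (combE ((1 + t) / 2)) comb_param (combE t); congr (_ + _ *: _); lra.
have Cz : C ((1 - t) *: x + t *: y) by exact: ri_sub (segri _ t01).
have fz : f ((1 - t) *: x + t *: y) < r.
  have C1 := @ri_sub R V C _ (segri _ a01); have C2 := @ri_sub R V C _ (segri _ b01).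
  rewrite -ez; apply: (lt_le_trans (qc _ _ t C1 C2 z12 t01)).
  by rewrite ge_max f1 f2.
have AffSx : Aff S x by move: hx; rewrite rcE => -[].
have AffSy : Aff S y by move: hy; rewrite rcE => -[].
have AffSz : Aff S ((1 - t) *: x + t *: y) by exact: affine_Aff.
apply: riP => //.
have N1 := cont_lt cf Cz fz.
have N2 := riE (segri _ t01) (AffS SC _ AffSz).
apply: filterS (filterI N1 N2) => w [h1 h2] Aw.
have Cw : C w by apply: h2; exact: AffS SC _ Aw.
by split => //; exact/ltW/h1.
Qed.

Lemma sc_qc C (f : V -> R) : strictly_convex_fun C f -> strictly_quasi_convex C f.
Proof.
move=> scf x y t Cx Cy xy t01; apply: (lt_le_trans (scf x y t Cx Cy xy t01)).
have hx : f x <= Num.max (f x) (f y) by rewrite le_max lexx.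
have hy : f y <= Num.max (f x) (f y) by rewrite le_max lexx orbT.
move: hx hy; set M := Num.max _ _ => hx hy.
case/andP: t01 => t0 t1.
nra.
Qed.

End Main.


Theorem mainTheorem6 (R : realType) (V : topologicalLmodType R)
  (C : set V) (f : V -> R) :
  strictly_convex_set C ->
  {within C, continuous f} ->
  (strictly_quasi_convex C f -> strictly_sub_convex C f) /\
  (strictly_convex_fun C f -> strictly_sub_convex C f).
Proof.
move=> sC cf; split; first exact: qc_sub.
by move=> h; apply: qc_sub => //; exact: sc_qc.
Qed.
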